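(* For all positive integers $k,n$ it holds that $u(n,n+k)\ge \varepsilon(n,n+k)-2^{k-1}-1$.
   Context: All matrices are binary. For a nonempty set $S$ of columns of a binary matrix, let $z$ be the sum over the integers of the columns in $S$. $S$ is called $1$-free if no entry of $z$ equals $1$, and even if all entries of $z$ are even. For a binary $m\times n$ matrix $A$ with $m<n$: $\varepsilon(A)$ is the smallest cardinality of a nonempty even set of columns, and $u(A)$ is the smallest cardinality of a nonempty $1$-free set of columns. For $m<n$, $\varepsilon(m,n)$ and $u(m,n)$ denote the maxima of $\varepsilon(A)$, resp. $u(A)$, over all binary $m\times n$ matrices $A$. *)

(* Defs.v *)
From mathcomp Require Import all_boot all_algebra.
Set Implicit Arguments. Unset Strict Implicit. Unset Printing Implicit Defensive.

(* Binary m x n matrices are matrices with boolean entries (true = 1).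
   For a set S of columns, the integer column sum z has entry
   z_i = #|{ j in S | A i j = 1 }| at row i. *)
Definition colsum (m n : nat) (A : 'M[bool]_(m, n)) (S : {set 'I_n}) (i : 'I_m) : nat :=
  #|[set j in S | A i j]|.

Definition one_free (m n : nat) (A : 'M[bool]_(m, n)) (S : {set 'I_n}) : bool :=
  [forall i, colsum A S i != 1%N].

Definition even_set (m n : nat) (A : 'M[bool]_(m, n)) (S : {set 'I_n}) : bool :=
  [forall i, ~~ odd (colsum A S i)].

(* The default value n.+1 is only used when no such set exists, which
   never happens for m < n (the columns are then linearly dependent over GF(2)). *)
Definition epsA (m n : nat) (A : 'M[bool]_(m, n)) : nat :=
  \big[minn/n.+1]_(S : {set 'I_n} | (S != set0) && even_set A S) #|S|.

Definition uA (m n : nat) (A : 'M[bool]_(m, n)) : nat :=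
  \big[minn/n.+1]_(S : {set 'I_n} | (S != set0) && one_free A S) #|S|.

Definition eps_mn (m n : nat) : nat := \max_(A : 'M[bool]_(m, n)) epsA A.
Definition u_mn (m n : nat) : nat := \max_(A : 'M[bool]_(m, n)) uA A.

(* Main.v *)
Require Import Defs.
From mathcomp Require Import all_boot all_algebra zify.
Set Implicit Arguments. Unset Strict Implicit. Unset Printing Implicit Defensive.

Section SD.
Variable T : finType.
Definition sd (X Y : {set T}) := (X :\: Y) :|: (Y :\: X).

Lemma sd_card (X Y : {set T}) : #|sd X Y| + 2 * #|X :&: Y| = #|X| + #|Y|.
Proof.
have h := cardsUI (X :\: Y) (Y :\: X).
have e : (X :\: Y) :&: (Y :\: X) = set0.
  by apply/setP=> x; rewrite !inE; case: (x \in X); case: (x \in Y).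
rewrite e cards0 addn0 in h. rewrite /sd h.
have h1 := cardsID Y X. have h2 := cardsID X Y. rewrite setIC in h2. lia.
Qed.

Lemma sd_odd (X Y : {set T}) : odd #|sd X Y| = odd #|X| (+) odd #|Y|.
Proof.
have h := sd_card X Y. by rewrite -oddD -h oddD oddM /= addbF.
Qed.

Lemma sdK (X Y : {set T}) : sd (sd X Y) Y = X.
Proof. apply/setP=> x; rewrite !inE; by case: (x \in X); case: (x \in Y). Qed.

Lemma sd_inj (Y : {set T}) : injective (sd ^~ Y).
Proof. by move=> a b /(congr1 (sd ^~ Y)); rewrite /= !sdK. Qed.

Lemma sdC (X Y : {set T}) : sd X Y = sd Y X.
Proof. by rewrite /sd setUC. Qed.

Lemma sdvv (X : {set T}) : sd X X = set0.
Proof. by apply/setP=> x; rewrite !inE; case: (x \in X). Qed.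

Lemma in_sd x (X Y : {set T}) : (x \in sd X Y) = (x \in X) (+) (x \in Y).
Proof. by rewrite !inE; case: (x \in X); case: (x \in Y). Qed.
End SD.

Lemma bigmin_le_seq (I : eqType) (s : seq I) (P : pred I) (F : I -> nat) x i0 :
  i0 \in s -> P i0 -> \big[minn/x]_(i <- s | P i) F i <= F i0.
Proof.
elim: s => // a s IH; rewrite inE big_cons => /orP[/eqP<-|h] hP.
  by rewrite hP geq_minl.
case: (P a); last exact: IH.
by apply: leq_trans (geq_minr _ _) _; exact: IH.
Qed.

Lemma bigmin_le (I : finType) (P : pred I) (F : I -> nat) x i0 :
  P i0 -> \big[minn/x]_(i | P i) F i <= F i0.
Proof. by apply: bigmin_le_seq; rewrite mem_index_enum. Qed.

Lemma bigmin_ge (I : finType) (P : pred I) (F : I -> nat) x b :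
  b <= x -> (forall i, P i -> b <= F i) -> b <= \big[minn/x]_(i | P i) F i.
Proof.
move=> hx hF; apply: (big_ind (fun m => b <= m)) => //.
by move=> y z hy hz; rewrite leq_min hy hz.
Qed.

Section Plotkin.
Variables (n N : nat) (A : 'M[bool]_(n, N)).

Definition par (S : {set 'I_N}) : {ffun 'I_n -> bool} := [ffun i => odd (colsum A S i)].

Lemma par_sd S S' i : par (sd S S') i = par S i (+) par S' i.
Proof.
rewrite !ffunE /colsum -sd_odd.
have -> : [set j in sd S S' | A i j] = sd [set j in S | A i j] [set j in S' | A i j].
  apply/setP => j; rewrite /sd !inE; by case: (j \in S); case: (j \in S'); case: (A i j).
by [].
Qed.

Lemma evenP S : reflect (forall i, par S i = false) (even_set A S).
Proof.
apply: (iffP forallP) => h i; first by rewrite ffunE; apply/negbTE/h.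
by have := h i; rewrite ffunE => ->.
Qed.

Definition E := [set S | even_set A S].

Lemma even_same S S' : par S = par S' -> sd S S' \in E.
Proof.
move=> h; rewrite inE; apply/evenP=> i; rewrite par_sd h.
by case: (par S' i).
Qed.

Lemma E_sd S S' : S \in E -> S' \in E -> sd S S' \in E.
Proof.
rewrite !inE => /evenP h /evenP h'; apply/evenP=> i.
by rewrite par_sd h h'.
Qed.

Lemma E0 : set0 \in E.
Proof.
rewrite inE; apply/evenP=> i; rewrite ffunE /colsum.
have -> : [set j in set0 | A i j] = set0 by apply/setP=> j; rewrite !inE.
by rewrite cards0.
Qed.

Lemma card_sets : #|{set 'I_N}| = 2 ^ N.
Proof. by rewrite -cardsT -powersetT card_powerset cardsT card_ord. Qed.

Lemma pigeon k : N = n + k -> exists v, 2 ^ k <= #|[set S | par S == v]|.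
Proof.
move=> hN; case: (boolP [exists v, 2 ^ k <= #|[set S | par S == v]|]) => [/existsP //|/existsPn h]; exfalso.
have : \sum_(S : {set 'I_N}) 1 < 2 ^ N.
  rewrite (partition_big par xpredT) //=.
  apply: (@leq_trans (\sum_(v : {ffun 'I_n -> bool}) (2 ^ k).-1).+1).
    rewrite ltnS; apply: leq_sum => v _.
    rewrite (eq_bigl (fun S => par S == v)); last by [].
    rewrite sum1dep_card. have := h v. rewrite -ltnNge. by case: (2 ^ k) => //.
  rewrite sum_nat_const card_ffun card_bool card_ord hN expnD.
  have : 0 < 2 ^ k by rewrite expn_gt0. have : 0 < 2 ^ n by rewrite expn_gt0. nia.
by rewrite sum1_card card_sets ltnn.
Qed.

Lemma E_big k : N = n + k -> 2 ^ k <= #|E|.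
Proof.
move=> /pigeon [v hv].
have [S0 hS0] : exists S0, S0 \in [set S | par S == v].
  apply/set0Pn; rewrite -card_gt0; apply: leq_trans hv; by rewrite expn_gt0.
apply: (leq_trans hv); rewrite -(card_imset _ (@sd_inj _ S0)).
apply: subset_leq_card; apply/subsetP=> X /imsetP [S hS ->].
apply: even_same; move: hS hS0; rewrite !inE => /eqP -> /eqP ->. done.
Qed.

Lemma half j : 2 * #|[set S in E | j \in S]| <= #|E|.
Proof.
set Ej := [set S in E | j \in S].
case: (set_0Vmem Ej) => [->|[S1 h1]]; first by rewrite cards0.
have hsub : Ej \subset E by apply/subsetP=> X; rewrite inE => /andP[].
have hc : #|Ej| <= #|E :\: Ej|.
  rewrite -(card_imset _ (@sd_inj _ S1)); apply: subset_leq_card.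
  apply/subsetP=> X /imsetP [S hS ->].
  have hE1 : S1 \in E by move: h1; rewrite inE => /andP[].
  have hj1 : j \in S1 by move: h1; rewrite inE => /andP[].
  move: hS; rewrite inE => /andP[hE hj].
  have := E_sd hE hE1; rewrite !inE => ->; by rewrite hj hj1.
have := cardsID Ej E. rewrite (setIidPr hsub). lia.
Qed.

Lemma sum_E : \sum_(S in E) #|S| = \sum_(j : 'I_N) #|[set S in E | j \in S]|.
Proof.
under eq_bigr => S _ do rewrite -sum1_card big_mkcond /=.
rewrite exchange_big /=; apply: eq_bigr => j _.
by rewrite -big_mkcondr /= sum1dep_card.
Qed.

Lemma sum_E_le : 2 * \sum_(S in E) #|S| <= N * #|E|.
Proof.
rewrite sum_E big_distrr /=.
apply: (@leq_trans (\sum_(j : 'I_N) #|E|)); first by apply: leq_sum => j _; exact: half.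
by rewrite sum_nat_const card_ord.
Qed.

Lemma eps_le S : S \in E -> S != set0 -> epsA A <= #|S|.
Proof.
move=> hE hS; rewrite /epsA; apply: bigmin_le.
by rewrite hS; move: hE; rewrite inE.
Qed.

Lemma sum_E_ge : (#|E| - 1) * epsA A <= \sum_(S in E) #|S|.
Proof.
rewrite (bigD1 set0) ?E0 //= cards0 add0n.
apply: (@leq_trans (\sum_(S | (S \in E) && (S != set0)) epsA A)).
  rewrite sum_nat_const. apply: leq_mul => //.
  have := cardsD1 set0 E. rewrite E0 /=.
  move=> ->; rewrite add1n subSS subn0; apply: eq_leq; apply: eq_card => S.
  by rewrite !inE -topredE /= inE andbC.
apply: leq_sum => S /andP[h1 h2]; exact: eps_le.
Qed.

Lemma plotkin k : N = n + k -> 2 * epsA A * (2 ^ k - 1) <= N * 2 ^ k.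
Proof.
move=> hN; have h1 := E_big hN; have h2 := sum_E_le; have h3 := sum_E_ge.
have hK : 0 < 2 ^ k by rewrite expn_gt0.
move: h1 h2 h3 hK; set x := #|E|; set K := 2 ^ k; set e := epsA A; set s := \sum_(S in E) #|S|.
nia.
Qed.
End Plotkin.

Definition cnt k (Y : nat -> bool) := \sum_(1 <= w < 2 ^ k) (Y w : nat).
Definition Hyp k (Y : nat -> bool) := forall j v, j < k -> 0 < v < 2 ^ j ->
  (Y (2 ^ j + v) + Y (2 ^ j) + Y v != 1)%N.

Lemma cnt_split k Y : cnt k.+1 Y = cnt k Y + Y (2 ^ k) + \sum_(1 <= v < 2 ^ k) (Y (v + 2 ^ k) : nat).
Proof.
have hk : 0 < 2 ^ k by rewrite expn_gt0.
have hk2 : 2 ^ k.+1 = 2 ^ k + 2 ^ k by rewrite expnS mul2n addnn.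
rewrite /cnt (@big_cat_nat _ _ _ (2 ^ k)) //=; try lia.
rewrite -addnA; congr (_ + _).
rewrite big_ltn; try lia; congr (_ + _).
rewrite hk2.
by rewrite -{1}(add1n (2 ^ k)) big_addn addnK.
Qed.

Lemma key k Y : Hyp k.+1 Y -> (exists w, 0 < w < 2 ^ k.+1 /\ Y w) -> 2 ^ k <= cnt k.+1 Y.
Proof.
elim: k Y => [|k IH] Y hH [w [hw hY]].
  have hw1 : w = 1 by move: hw; rewrite expn1; lia.
  by rewrite hw1 in hY; rewrite /cnt expn1 big_nat1 hY.
rewrite cnt_split.
set a := 2 ^ k.+1.
have ha : 0 < a by rewrite expn_gt0.
have hlev : forall v, 0 < v < a -> (Y (a + v) + Y a + Y v != 1)%N.
  by move=> v hv; apply: hH.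
case hYa : (Y a).
- have h1 : \sum_(1 <= v < a) 1 <= cnt k.+1 Y + \sum_(1 <= v < a) (Y (v + a) : nat).
    rewrite /cnt -big_split /= big_nat_cond [X in _ <= X]big_nat_cond.
    apply: leq_sum => v /andP[hv _].
    have := hlev v; rewrite hYa addnC.
    rewrite (addnC v a) => /(_ hv). by case: (Y v); case: (Y (a + v)).
  rewrite sum_nat_const_nat muln1 in h1.
  rewrite /=. lia.
- have e : \sum_(1 <= v < a) (Y (v + a) : nat) = cnt k.+1 Y.
    rewrite /cnt; apply: eq_big_nat => v hv.
    have := hlev v hv; rewrite hYa addnC.
    rewrite (addnC v a); by case: (Y v); case: (Y (a + v)).
  rewrite e /= addn0.
  have hH' : Hyp k.+1 Y.
    move=> j v hj hv; apply: hH => //; exact: (ltn_trans hj (ltnSn _)).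
  have ha2 : 2 ^ k.+2 = a + a by rewrite /a [2 ^ k.+2]expnS mul2n addnn.
  have hne : exists w, 0 < w < 2 ^ k.+1 /\ Y w.
    case: (ltngtP w a) => hwa.
    + exists w; split => //; move: hw hwa; rewrite -/a; lia.
    + have hv : 0 < w - a < a by move: hw; rewrite ha2; lia.
      exists (w - a); split; first exact: hv.
      have := hlev _ hv; rewrite subnKC ?(ltnW hwa) // hY hYa.
      by case: (Y (w - a)).
    + by move: hY; rewrite hwa hYa.
  have := IH Y hH' hne. rewrite /a expnS mul2n -addnn. lia.
Qed.

Lemma card2 (U : finType) (S : {set U}) a b : (a \in S) != (b \in S) -> #|S :&: [set a; b]| = 1.
Proof.
move=> h; apply/eqP/cards1P.
case ha: (a \in S); case hb: (b \in S); rewrite ha hb in h => //.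
  exists a; apply/setP=> j; rewrite !inE; apply/idP/idP.
    move=> /andP[hj /orP[/eqP e|/eqP e]]; subst j; rewrite ?eqxx //; by move: hj; rewrite ?ha ?hb.
  by move=> /eqP ->; rewrite ha eqxx.
exists b; apply/setP=> j; rewrite !inE; apply/idP/idP.
  move=> /andP[hj /orP[/eqP e|/eqP e]]; subst j; rewrite ?eqxx //; by move: hj; rewrite ?ha ?hb.
by move=> /eqP ->; rewrite hb eqxx orbT.
Qed.

Lemma card3 (U : finType) (S : {set U}) a b c :
  ((a \in S) + (b \in S) + (c \in S) = 1)%N -> #|S :&: [set a; b; c]| = 1.
Proof.
move=> h; apply/eqP/cards1P.
case ha: (a \in S); case hb: (b \in S); case hc: (c \in S); rewrite ha hb hc in h => //.
- exists a; apply/setP=> j; rewrite !inE; apply/idP/idP.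
    move=> /andP[hj /orP[/orP[/eqP e|/eqP e]|/eqP e]]; subst j; rewrite ?eqxx //; by move: hj; rewrite ?ha ?hb ?hc.
  by move=> /eqP ->; rewrite ?ha ?hb ?hc ?eqxx ?orbT.
- exists b; apply/setP=> j; rewrite !inE; apply/idP/idP.
    move=> /andP[hj /orP[/orP[/eqP e|/eqP e]|/eqP e]]; subst j; rewrite ?eqxx //; by move: hj; rewrite ?ha ?hb ?hc.
  by move=> /eqP ->; rewrite ?ha ?hb ?hc ?eqxx ?orbT.
- exists c; apply/setP=> j; rewrite !inE; apply/idP/idP.
    move=> /andP[hj /orP[/orP[/eqP e|/eqP e]|/eqP e]]; subst j; rewrite ?eqxx //; by move: hj; rewrite ?ha ?hb ?hc.
  by move=> /eqP ->; rewrite ?ha ?hb ?hc ?eqxx ?orbT.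
Qed.

Section Constr.
Variables n k : nat.
Local Notation N := (n + k).+1.
Definition TT := (2 ^ k.+1).-1.
Definition col (x : nat) : 'I_N := inord x.
Definition tie (i : 'I_(N - TT)) : {set 'I_N} := [set col i; col (i + TT)].
Definition Pw (w : 'I_TT) : bool := 2 ^ trunc_log 2 w.+1 != w.+1.
Definition tri (w : 'I_TT) : {set 'I_N} :=
  [set col w; col (2 ^ trunc_log 2 w.+1).-1; col (w.+1 - 2 ^ trunc_log 2 w.+1).-1].
Definition FF : {set {set 'I_N}} :=
  [set tie i | i : 'I_(N - TT)] :|: [set tri w | w in [set w | Pw w]].
Definition MM : 'M[bool]_(n, N) := \matrix_(i, c) (c \in nth set0 (enum FF) i).

Lemma TT_ge : k.+1 <= TT.
Proof.
rewrite /TT; elim: k => [//|j IH].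
rewrite expnS. have := expn_gt0 2 j.+1. lia.
Qed.

Lemma nonP_card : k.+1 <= #|~: [set w | Pw w]|.
Proof.
have hT := TT_ge.
have hlt : forall t : 'I_k.+1, (2 ^ t).-1 < TT.
  move=> t; rewrite /TT; have := ltn_ord t => ht.
  have : 2 ^ t < 2 ^ k.+1 by rewrite ltn_exp2l.
  have := expn_gt0 2 t. lia.
pose f (t : 'I_k.+1) : 'I_TT := Ordinal (hlt t).
have finj : injective f.
  move=> t t' /(congr1 val) /= e; apply/val_inj => /=.
  apply: (@expnI 2) => //. have := expn_gt0 2 t; have := expn_gt0 2 t'. lia.
rewrite -[k.+1]card_ord -(card_imset _ finj).
apply: subset_leq_card; apply/subsetP => w /imsetP [t _ ->].
rewrite !inE /Pw /= negbK prednK ?expn_gt0 //.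
by rewrite (@trunc_log_eq 2 t) //; rewrite leqnn /= ltn_exp2l.
Qed.

Lemma cardFF : TT <= N -> #|FF| <= n.
Proof.
move=> hN.
apply: (leq_trans (leq_card_setU _ _)).
have h1 : #|[set tie i | i : 'I_(N - TT)]| <= N - TT.
  by apply: (leq_trans (leq_imset_card _ _)); rewrite ?cardsT card_ord.
have h2 : #|[set tri w | w in [set w | Pw w]]| <= #|[set w | Pw w]| by apply: leq_imset_card.
have h3 := cardsC [set w | Pw w]. rewrite card_ord in h3.
have h4 := nonP_card.
have h5 := TT_ge.
clear -h1 h2 h3 h4 h5 hN. move: h1 h2 h3 h4 h5 hN. set x1 := #|[set tie _ | _ : _]|. set x2 := #|[set tri _ | _ in _]|. set x3 := #|[set w | Pw w]|. set x4 := #|~: _|. lia.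
Qed.

Lemma TT_gt0 : 0 < TT.
Proof. by have := TT_ge; lia. Qed.

Lemma colK x : x < N -> col x = x :> nat.
Proof. by move=> h; rewrite /col inordK. Qed.

Lemma rowF X : TT <= N -> X \in FF -> exists i : 'I_n, forall c, MM i c = (c \in X).
Proof.
move=> hN hX.
have hi : index X (enum FF) < n.
  by apply: (leq_trans _ (cardFF hN)); rewrite cardE index_mem mem_enum.
by exists (Ordinal hi) => c; rewrite mxE /= nth_index ?mem_enum.
Qed.

Lemma oneFF S X : TT <= N -> one_free MM S -> X \in FF -> #|S :&: X| != 1.
Proof.
move=> hN hS hX; have [i hi] := rowF hN hX.
have := (forallP hS) i; rewrite /colsum.
have -> : [set j in S | MM i j] = S :&: X by apply/setP=> j; rewrite !inE hi.
done.
Qed.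

Lemma tieS S c : TT <= N -> one_free MM S -> c + TT < N -> (col c \in S) = (col (c + TT) \in S).
Proof.
move=> hN hS hc.
have hc' : c < N - TT by lia.
have hX : tie (Ordinal hc') \in FF.
  rewrite inE; apply/orP; left; apply/imsetP; exists (Ordinal hc') => //.
have H := oneFF hN hS hX.
apply/eqP; apply: (contraNT _ H) => ne; apply/eqP; exact: card2.
Qed.

Lemma triS S j v : TT <= N -> one_free MM S -> j < k.+1 -> 0 < v < 2 ^ j ->
  ((col (2 ^ j + v).-1 \in S) + (col (2 ^ j).-1 \in S) + (col v.-1 \in S) != 1)%N.
Proof.
move=> hN hS hj hv.
have hx : (2 ^ j + v).-1 < TT.
  rewrite /TT. have : 2 ^ j.+1 <= 2 ^ k.+1 by rewrite leq_exp2l.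
  rewrite expnS. have := expn_gt0 2 j. lia.
pose w : 'I_TT := Ordinal hx.
have hw1 : w.+1 = 2 ^ j + v by rewrite /= prednK //; have := expn_gt0 2 j; lia.
have htl : trunc_log 2 w.+1 = j.
  rewrite hw1; apply: trunc_log_eq => //; rewrite expnS. have := expn_gt0 2 j. lia.
have hP : Pw w by rewrite /Pw htl hw1; apply/eqP; lia.
have hX : tri w \in FF.
  rewrite inE; apply/orP; right; apply/imsetP; exists w => //; by rewrite inE.
have H := oneFF hN hS hX.
move: H; rewrite /tri htl hw1 /=.
have -> : (2 ^ j + v - 2 ^ j) = v by lia.
apply: contra => /eqP h; apply/eqP; apply: card3.
done.
Qed.

Lemma upS S c t : TT <= N -> one_free MM S -> c + t * TT < N -> col c \in S -> col (c + t * TT) \in S.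
Proof.
move=> hN hS; elim: t => [|t IH] h hc; first by rewrite mul0n addn0.
have e : c + t.+1 * TT = (c + t * TT) + TT by rewrite mulSn; lia.
rewrite e -tieS //; last by rewrite -e.
apply: IH => //. rewrite mulSn in h. have := TT_gt0. lia.
Qed.

Lemma downS S c : TT <= N -> one_free MM S -> c < N -> col c \in S -> col (c %% TT) \in S.
Proof.
move=> hN hS; have [m] := ubnP c; elim: m c => // m IH c hcm hc hin.
case: (ltnP c TT) => hcT; first by rewrite modn_small.
have e : c = (c - TT) + TT by lia.
have h1 : col (c - TT) \in S by rewrite (tieS hN hS) -?e //; lia.
have e2 : c %% TT = (c - TT) %% TT by rewrite {1}e modnDr.
rewrite e2; apply: IH => //; have := TT_gt0; lia.
Qed.


Lemma S_big S : TT <= N -> one_free MM S -> S != set0 -> 2 ^ k * (N %/ TT) <= #|S|.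
Proof.
move=> hN hS hne.
pose Y := fun x => col x.-1 \in S.
have hH : Hyp k.+1 Y by move=> j v hj hv; exact: triS.
have /set0Pn [c hc] := hne.
have hex : exists w, 0 < w < 2 ^ k.+1 /\ Y w.
  exists (c %% TT).+1; split.
    have := ltn_pmod c TT_gt0; rewrite /TT; have := expn_gt0 2 k.+1; lia.
  rewrite /Y /=. apply: downS => //; by rewrite /col inord_val.
have hk := key hH hex.
pose q := N %/ TT.
pose D := setX [set w : 'I_TT | Y w.+1] [set: 'I_q].
pose g (p : 'I_TT * 'I_q) : 'I_N := col (p.1 + p.2 * TT).
have hq : q * TT <= N by apply: leq_divM.
have hlt : forall p : 'I_TT * 'I_q, p.1 + p.2 * TT < N.
  move=> [a b] /=; have ha := ltn_ord a; have hb := ltn_ord b. nia.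
have ginj : injective g.
  move=> [a b] [a' b'] /(congr1 val); rewrite /g /= !colK; last first.
    exact: (hlt (a, b)). exact: (hlt (a', b')).
  move=> e.
  have ea : a = a' :> nat.
    have := congr1 (fun x => x %% TT) e; rewrite /= !(addnC _ (_ * TT)) !modnMDl !modn_small //.
  have eb : b = b' :> nat.
    have := congr1 (fun x => x %/ TT) e; rewrite /= !(addnC _ (_ * TT)) !divnMDl ?TT_gt0 // !divn_small //.
    by rewrite !addn0.
  by rewrite (val_inj ea) (val_inj eb).
have hsub : g @: D \subset S.
  apply/subsetP => x /imsetP [[a b] hp ->]; move: hp; rewrite !inE => /andP [ha _].
  exact: (upS hN hS (hlt (a, b))).
have hcard : #|D| = cnt k.+1 Y * q.
  rewrite cardsX cardsT card_ord; congr (_ * _).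
  rewrite /cnt big_add1 /= -/TT big_mkord -sum1dep_card big_mkcond /=.
  by apply: eq_bigr => i _; case: (Y i.+1).
have := subset_leq_card hsub; rewrite (card_imset _ ginj) hcard.
move=> h; apply: leq_trans h; exact: leq_mul.
Qed.

Lemma u_lower : 2 ^ k * (N %/ TT) <= u_mn n N.
Proof.
case: (leqP TT N) => hN; last by rewrite divn_small // muln0.
apply: (leq_trans _ (leq_bigmax MM)).
rewrite /uA; apply: bigmin_ge.
  have := leq_divM N TT.
  have : 2 ^ k <= TT by rewrite /TT expnS; have := expn_gt0 2 k; lia.
  nia.
by move=> S /andP [h1 h2]; exact: S_big.
Qed.

End Constr.

Theorem corollary6p2 (k n : nat) : (0 < k)%N -> (0 < n)%N ->
  (eps_mn n (n + k) <= u_mn n (n + k) + 2 ^ (k - 1) + 1)%N.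
Proof.
case: k => [//|k] _ _.
rewrite addnS subSS subn0.
have hu := u_lower n k.
apply/bigmax_leqP => A _.
have hp := plotkin A (k := k.+1) (esym (addnS n k)).
set e := epsA A in hp *.
set N := (n + k).+1 in hu hp *.
set P := 2 ^ k in hu *.
have hT : TT k = 2 * P - 1 by rewrite /TT expnS /P; lia.
have hP : 0 < P by rewrite expn_gt0.
rewrite expnS -/P in hp.
have h1 : e * (TT k) <= N * P by rewrite hT; nia.
set T := TT k in h1 hu.
have hT0 : 0 < T by rewrite /T hT; lia.
have hd := divn_eq N T.
have hr := ltn_pmod N hT0.
set q := N %/ T in hu hd.
set r := N %% T in hd hr.
have h3 : e * T < (q * P + P) * T.
  apply: (leq_ltn_trans h1). rewrite hd. nia.
rewrite ltn_pmul2r // in h3.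
move: hu h3; rewrite (mulnC P q) => hu h3. lia.
Qed.
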